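(* In a finite dynamic game as described in the context, let $K^i$ be unilaterally sufficient information for player $i$, with associated functions $F_t^{i,g^i}$. For every behavioral strategy $g^i$ of player $i$, let $\rho^i$ be the $K^i$-based strategy given by $$\rho_t^i(u_t^i\mid k_t^i)=\sum_{\tilde h_t^i\in\mathcal{H}_t^i}g_t^i(u_t^i\mid\tilde h_t^i)\,F_t^{i,g^i}(\tilde h_t^i\mid k_t^i).$$ Then $J^j(g^i,g^{-i})=J^j(\rho^i,g^{-i})$ for all players $j\in\mathcal{I}$ and all behavioral strategy profiles $g^{-i}$ of the players other than $i$.
   Context: Game model: finite set of players $\mathcal{I}$, times $\mathcal{T}=\{1,\dots,T\}$. At time $t$ each player $i$ takes action $U_t^i\in\mathcal{U}_t^i$, obtains reward $R_t^i\in[-1,1]$ and learns new information $Z_t^i\in\mathcal{Z}_t^i$. There is a state $X_t\in\mathcal{X}_t$ with $(X_{t+1},Z_t,R_t)=f_t(X_t,U_t,W_t)$ for fixed functions $f_t$. Primitive random variables $(X_1,H_1)$ and $W_1,\dots,W_T$ are mutually independent with commonly known distributions. All sets are finite. Perfect recall: $H_t^i=(H_1^i,Z_{1:t-1}^i)\in\mathcal{H}_t^i$, and $U_t^i$ is a component of $Z_t^i$. Behavioral strategy $g_t^i:\mathcal{H}_t^i\to\Delta(\mathcal{U}_t^i)$; payoff $J^j(g)=\mathbb{E}^g[\sum_t R_t^j]$. A realization is admissible under $g$ if it has positive probability under $g$. Compression: $K_1^i=\iota_1^i(H_1^i)$, $K_t^i=\iota_t^i(K_{t-1}^i,Z_{t-1}^i)$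 for fixed maps, finite value sets $\mathcal{K}_t^i$; $k_t^i$ is the compression of $h_t^i$; a $K^i$-based strategy has $\rho_t^i:\mathcal{K}_t^i\to\Delta(\mathcal{U}_t^i)$. Unilaterally sufficient information (USI): $K^i$ is USI for player $i$ if there exist $F_t^{i,g^i}:\mathcal{K}_t^i\to\Delta(\mathcal{H}_t^i)$ depending only on $g^i$ and $\Phi_t^{i,g^{-i}}:\mathcal{K}_t^i\to\Delta(\mathcal{X}_t\times\mathcal{H}_t^{-i})$ depending only on $g^{-i}$ with $\Pr^g(x_t,h_t\mid k_t^i)=F_t^{i,g^i}(h_t^i\mid k_t^i)\Phi_t^{i,g^{-i}}(x_t,h_t^{-i}\mid k_t^i)$ for all behavioral profiles $g$, all $t$, all $k_t^i$ admissible under $g$ (with $x_t,h_t^i,h_t^{-i}$ ranging independently; the left side is $0$ if they disagree on shared components). *)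

(* Defs.v *)
(* Finite dynamic games, compressions, unilaterally
   sufficient information (USI), and payoffs. Times are 0-based:
   t = 0, ..., horizon-1 correspond to the paper's 1, ..., T. *)
From HB Require Import structures.
From mathcomp Require Import all_boot all_order all_algebra.
From mathcomp Require Import reals.
Set Implicit Arguments.
Unset Strict Implicit.
Unset Printing Implicit Defensive.
Import Order.TTheory GRing.Theory Num.Theory.
Local Open Scope ring_scope.

Unset Implicit Arguments.
Record game (R : realType) := Game {
  player : finType;
  horizon : nat;
  stateT : nat -> finType;
  actT : nat -> player -> finType;
  infoT : nat -> player -> finType;
  noiseT : nat -> finType;
  init_infoT : player -> finType;
  dyn : forall t, stateT t -> {dffun forall i, actT t i} -> noiseT t ->
        stateT t.+1 * {dffun forall i, infoT t i} * (player -> R);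
  init_law : stateT 0 -> {dffun forall i, init_infoT i} -> R;
  (* law of the primitive W_t; independence is built into [state_law] *)
  noise_law : forall t, noiseT t -> R;
  init_law_ge0 : forall x h, 0 <= init_law x h;
  init_law_sum1 : \sum_(x : stateT 0) \sum_(h : {dffun forall i, init_infoT i})
                    init_law x h = 1;
  noise_law_ge0 : forall t (w : noiseT t), (t < horizon)%N -> 0 <= noise_law t w;
  noise_law_sum1 : forall t, (t < horizon)%N -> \sum_(w : noiseT t) noise_law t w = 1;
  reward_bound : forall t (x : stateT t) u (w : noiseT t) i, (t < horizon)%N ->
                   -1 <= (dyn t x u w).2 i <= 1;
  (* U_t^i is a component of Z_t^i *)
  act_of_info : forall t i, infoT t i -> actT t i;
  act_in_info : forall t (x : stateT t) u (w : noiseT t) i,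
      act_of_info t i ((dyn t x u w).1.2 i) = u i
}.
Set Implicit Arguments.
Arguments player {R}.
Arguments horizon {R}.
Arguments stateT {R}.
Arguments actT {R}.
Arguments infoT {R}.
Arguments noiseT {R}.
Arguments init_infoT {R}.
Arguments dyn {R} g {t}.
Arguments init_law {R}.
Arguments noise_law {R} g {t}.
Arguments act_of_info {R} g {t i}.

Section GameDefs.
Context {R : realType} (G : game R).

(* H_t^i = (H_1^i, Z_{1:t-1}^i) (perfect recall) *)
Fixpoint hist (i : player G) (t : nat) : finType :=
  match t with
  | 0 => init_infoT G i
  | t'.+1 => (hist i t' * infoT G t' i)%type
  end.

(* behavioral strategies g_t^i : H_t^i -> Delta(U_t^i), as weights *)
Definition strat (i : player G) := forall t, hist i t -> actT G t i -> R.
Definition profile := forall i : player G, strat i.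

Definition valid_strat (i : player G) (s : strat i) : Prop :=
  forall t, (t < horizon G)%N -> forall h : hist i t,
    (forall u, 0 <= s t h u) /\ \sum_(u : actT G t i) s t h u = 1.

Definition valid_profile (g : profile) : Prop := forall i, valid_strat (g i).

Definition pact (g : profile) t (h : {dffun forall i, hist i t})
    (u : {dffun forall i, actT G t i}) : R :=
  \prod_(i : player G) g i t (h i) (u i).

(* Pr^g(X_t = x, H_t = h) *)
Fixpoint state_law (g : profile) (t : nat) :
    stateT G t -> {dffun forall i, hist i t} -> R :=
  match t as n return stateT G n -> {dffun forall i, hist i n} -> R with
  | 0 => init_law G
  | t'.+1 => fun x' h' =>
      \sum_(x : stateT G t') \sum_(h : {dffun forall i, hist i t'})
      \sum_(u : {dffun forall i, actT G t' i}) \sum_(w : noiseT G t')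
        state_law g x h * pact g h u * noise_law G w *
        (((dyn G x u w).1.1 == x') &&
         [forall i, h' i == (h i, (dyn G x u w).1.2 i)])%:R
  end.

Definition payoff (g : profile) (j : player G) : R :=
  \sum_(t < horizon G) \sum_(x : stateT G t) \sum_(h : {dffun forall i, hist i t})
    state_law g x h * \sum_(u : {dffun forall i, actT G t i}) pact g h u *
      \sum_(w : noiseT G t) noise_law G w * (dyn G x u w).2 j.

Definition upd (g : profile) (i : player G) (s : strat i) : profile :=
  fun j => match i =P j with
           | ReflectT e => eq_rect i strat s j e
           | ReflectF _ => g j
           end.

Record compression (i : player G) := Compression {
  kT : nat -> finType;
  iota0 : init_infoT G i -> kT 0;
  iotaS : forall t, kT t -> infoT G t i -> kT t.+1
}.

Fixpoint compress (i : player G) (c : compression i) (t : nat) :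
    hist i t -> kT c t :=
  match t as n return hist i n -> kT c n with
  | 0 => fun h => @iota0 i c h
  | t'.+1 => fun h => @iotaS i c t' (@compress i c t' h.1) h.2
  end.

Definition kstrat (i : player G) (c : compression i) :=
  forall t, kT c t -> actT G t i -> R.

Definition kstrat_lift (i : player G) (c : compression i) (rho : kstrat c) :
    strat i := fun t h u => rho t (compress c h) u.

Definition others (i : player G) : finType := {j : player G | j != i}.
Definition ohist (i : player G) t := {dffun forall j : others i, hist (sval j) t}.
Definition restr_hist (i : player G) t (h : {dffun forall j, hist j t}) : ohist i t :=
  @finfun (others i) (fun j => hist (sval j) t) (fun j => h (sval j)).
Definition ostrat (i : player G) := forall j : others i, strat (sval j).
Definition restr_prof (i : player G) (g : profile) : ostrat i :=
  fun j => g (sval j).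

Definition prob_k (g : profile) (i : player G) (c : compression i) t (k : kT c t) : R :=
  \sum_(x : stateT G t) \sum_(h : {dffun forall j, hist j t})
    state_law g x h * (compress c (h i) == k)%:R.

Definition cond_prob (g : profile) (i : player G) (c : compression i) t
    (k : kT c t) (x : stateT G t) (h : {dffun forall j, hist j t}) : R :=
  state_law g x h * (compress c (h i) == k)%:R / prob_k g k.

(* K^i is USI for player i, with witnesses F (depending only on g^i) and
   Phi (depending only on g^{-i}). *)
Definition USI_with (i : player G) (c : compression i)
    (F : strat i -> forall t, kT c t -> hist i t -> R)
    (Phi : ostrat i -> forall t, kT c t -> stateT G t -> ohist i t -> R) : Prop :=
  (forall s, valid_strat s -> forall t, (t < horizon G)%N -> forall k,
     (forall h, 0 <= F s t k h) /\ \sum_(h : hist i t) F s t k h = 1) /\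
  (forall s' : ostrat i, (forall j, valid_strat (s' j)) ->
     forall t, (t < horizon G)%N -> forall k,
     (forall x ho, 0 <= Phi s' t k x ho) /\
     \sum_(x : stateT G t) \sum_(ho : ohist i t) Phi s' t k x ho = 1) /\
  (forall g : profile, valid_profile g ->
     forall t, (t < horizon G)%N -> forall k : kT c t, 0 < prob_k g k ->
     forall x (h : {dffun forall j, hist j t}),
       cond_prob g k x h = F (g i) t k (h i) * Phi (@restr_prof i g) t k x (@restr_hist i t h)).

Definition USI (i : player G) (c : compression i) : Prop :=
  exists F Phi, @USI_with i c F Phi.

Definition rho_of (i : player G) (c : compression i)
    (F : strat i -> forall t, kT c t -> hist i t -> R) (s : strat i) : kstrat c :=
  fun t k u => \sum_(h : hist i t) s t h u * F s t k h.

End GameDefs.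

(* Main.v *)
Require Import Defs.
From HB Require Import structures.
From mathcomp Require Import all_boot all_order all_algebra.
From mathcomp Require Import reals ring.
Import Order.TTheory GRing.Theory Num.Theory.
Local Open Scope ring_scope.
Set Implicit Arguments.
Unset Strict Implicit.

Section Pf.
Variables (R : realType) (G : game R) (i : player G) (c : compression i).

Lemma prod_others (f : player G -> R) :
  \prod_(j | j != i) f j = \prod_(j : others i) f (sval j).
Proof.
rewrite (reindex_omap (sval : others i -> player G) insub); last first.
  by move=> j ji; rewrite insubT.
apply: eq_bigl=> -[j ji]/=; rewrite insubT /= ji; apply/eqP; congr Some; exact: val_inj.
Qed.

Definition neqi (j : player G) (ne : i <> j) : j != i :=
  introN (@eqP _ j i) (fun e => ne (esym e)).

Definition merge_at t (hi : hist i t) (ho : ohist i t) (j : player G) : hist j t :=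
    match i =P j return hist j t with
    | ReflectT e => eq_rect i (fun j => hist j t) hi j e
    | ReflectF ne => ho (@exist _ (fun j => j != i) j (@neqi j ne))
    end.

Definition merge t (hi : hist i t) (ho : ohist i t) : {dffun forall j, hist j t} :=
  @finfun _ (fun j => hist j t) (@merge_at t hi ho).

Lemma merge_i t hi ho : @merge t hi ho i = hi.
Proof.
rewrite ffunE /merge_at; case: (i =P i) => [e|//].
by have -> : e = erefl by apply: eq_irrelevance.
Qed.

Lemma restr_merge t hi ho : restr_hist i (@merge t hi ho) = ho.
Proof.
apply/ffunP => -[j pj]; rewrite !ffunE /merge_at /=.
case: (i =P j) => [e|ne].
  by exfalso; move: pj; rewrite -e eqxx.
by rewrite (bool_irrelevance (@neqi j ne) pj).
Qed.

Lemma merge_eta t (h : {dffun forall j, hist j t}) : merge (h i) (restr_hist i h) = h.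
Proof.
apply/ffunP => j; rewrite ffunE /merge_at; case: (i =P j) => [e|ne].
  by destruct e.
by rewrite ffunE.
Qed.

Lemma sum_merge t (f : hist i t -> R) ho :
  \sum_(h : {dffun forall j, hist j t}) f (h i) * (restr_hist i h == ho)%:R
  = \sum_(hi : hist i t) f hi.
Proof.
rewrite (eq_bigr (fun h => if restr_hist i h == ho then f (h i) else 0)); last first.
  by move=> h _; case: eqP; rewrite ?mulr1 ?mulr0.
rewrite -big_mkcond /=.
rewrite (reindex_onto (fun hi => merge hi ho) (fun h => h i)); last first.
  by move=> h /eqP <-; rewrite merge_eta.
apply: eq_big => hi; first by rewrite restr_merge merge_i !eqxx.
by rewrite merge_i.
Qed.

Lemma upd_i (g : profile G) (s : strat i) : @upd _ _ g _ s i = s.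
Proof.
rewrite /upd; case: (i =P i) => [e|//].
by have -> : e = erefl by apply: eq_irrelevance.
Qed.

Lemma upd_ne (g : profile G) (s : strat i) j : j != i -> @upd _ _ g _ s j = g j.
Proof.
move=> ji; rewrite /upd; case: (i =P j) => [e|//].
by exfalso; move: ji; rewrite -e eqxx.
Qed.

Definition Q (p : profile G) t (ho : ohist i t) (u : {dffun forall j, actT G t j}) : R :=
  \prod_(j : others i) p (sval j) t (ho j) (u (sval j)).

Lemma pact_split (p : profile G) t h u :
  pact p h u = p i t (h i) (u i) * Q p (restr_hist i h) u.
Proof.
rewrite /pact (bigD1 i) //=; congr (_ * _).
rewrite (prod_others (fun j => p j t (h j) (u j))).
by apply: eq_bigr => j _; rewrite ffunE.
Qed.

Lemma Q_upd (g : profile G) (s : strat i) t ho u : Q (upd g s) ho u = Q g (t:=t) ho u.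
Proof. by apply: eq_bigr => -[j ji] _ /=; rewrite upd_ne. Qed.

Lemma sl_ge0 (p : profile G) : valid_profile p ->
  forall t, (t <= horizon G)%N -> forall x h, 0 <= state_law p (t:=t) x h.
Proof.
move=> hp; elim=> [|t IH] ht x h /=; first exact: init_law_ge0.
apply: sumr_ge0 => x0 _; apply: sumr_ge0 => h0 _; apply: sumr_ge0 => u _;
  apply: sumr_ge0 => w _.
apply: mulr_ge0; last exact: ler0n.
apply: mulr_ge0; last exact: noise_law_ge0.
apply: mulr_ge0; first by apply: IH; apply: ltnW.
by apply: prodr_ge0 => j _; apply: (hp j t ht (h0 j)).1.
Qed.

Definition piH t (h : {dffun forall j, hist j t}) : (ohist i t * kT c t)%type :=
  (restr_hist i h, compress c (h i)).

Definition Lw (p : profile G) t (x : stateT G t) (y : (ohist i t * kT c t)%type) : R :=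
  \sum_(h : {dffun forall j, hist j t}) state_law p x h * (piH h == y)%:R.

Lemma sum_ind (T : finType) (a : T) (f : T -> R) :
  \sum_(y : T) (a == y)%:R * f y = f a.
Proof.
rewrite (bigD1 a) //= eqxx mul1r big1 ?addr0 // => y ya.
by rewrite eq_sym (negbTE ya) mul0r.
Qed.

Lemma gen (p : profile G) t (rhoK : kstrat c)
  (Hk : forall x y a, \sum_(h : {dffun forall j, hist j t})
          state_law p x h * p i t (h i) a * (piH h == y)%:R = Lw p x y * rhoK t y.2 a)
  (Psi : stateT G t -> (ohist i t * kT c t)%type -> {dffun forall j, actT G t j} -> R) :
  \sum_(x : stateT G t) \sum_(h : {dffun forall j, hist j t})
     state_law p x h * \sum_(u : {dffun forall j, actT G t j}) pact p h u * Psi x (piH h) u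
  = \sum_(x : stateT G t) \sum_(y : (ohist i t * kT c t)%type) Lw p x y *
     \sum_(u : {dffun forall j, actT G t j}) rhoK t y.2 (u i) * Q p y.1 u * Psi x y u.
Proof.
apply: eq_bigr => x _.
transitivity (\sum_(h : {dffun forall j, hist j t}) \sum_(u : {dffun forall j, actT G t j})
   \sum_(y : (ohist i t * kT c t)%type)
   (state_law p x h * p i t (h i) (u i) * (piH h == y)%:R) * (Q p y.1 u * Psi x y u)).
  apply: eq_bigr => h _; rewrite mulr_sumr; apply: eq_bigr => u _.
  rewrite (eq_bigr (fun y => (piH h == y)%:R * (state_law p x h * p i t (h i) (u i) * (Q p y.1 u * Psi x y u)))); last by move=> y _; ring.
  rewrite sum_ind pact_split /=; ring.
rewrite exchange_big /=.
under eq_bigr do rewrite exchange_big /=.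
rewrite exchange_big /=; apply: eq_bigr => y _.
rewrite mulr_sumr; apply: eq_bigr => u _.
by rewrite -mulr_suml Hk; ring.
Qed.

Definition nextY t (y : (ohist i t * kT c t)%type) (z : {dffun forall j, infoT G t j}) :
  (ohist i t.+1 * kT c t.+1)%type :=
  (@finfun (others i) (fun j => hist (sval j) t.+1) (fun j => (y.1 j, z (sval j))),
   @iotaS _ _ _ c t y.2 (z i)).

Definition PsiS t (x' : stateT G t.+1) (y' : (ohist i t.+1 * kT c t.+1)%type)
  (x : stateT G t) (y : (ohist i t * kT c t)%type) (u : {dffun forall j, actT G t j}) : R :=
  \sum_(w : noiseT G t) noise_law G w * ((dyn G x u w).1.1 == x')%:R *
     (nextY y (dyn G x u w).1.2 == y')%:R.

Lemma Lw_step (p : profile G) t x' y' :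
  Lw p (t:=t.+1) x' y' =
  \sum_(x : stateT G t) \sum_(h : {dffun forall j, hist j t})
     state_law p x h * \sum_(u : {dffun forall j, actT G t j}) pact p h u * PsiS x' y' x (piH h) u.
Proof.
rewrite /Lw.
transitivity (\sum_(x : stateT G t) \sum_(h : {dffun forall j, hist j t})
  \sum_(u : {dffun forall j, actT G t j}) \sum_(w : noiseT G t)
  \sum_(h' : {dffun forall j, hist j t.+1})
    state_law p x h * pact p h u * noise_law G w *
        (((dyn G x u w).1.1 == x') &&
         [forall j, h' j == (h j, (dyn G x u w).1.2 j)])%:R * (piH h' == y')%:R).
  transitivity (\sum_(h' : {dffun forall j, hist j t.+1}) \sum_(x : stateT G t)
    \sum_(h : {dffun forall j, hist j t})
  \sum_(u : {dffun forall j, actT G t j}) \sum_(w : noiseT G t)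
    state_law p x h * pact p h u * noise_law G w *
        (((dyn G x u w).1.1 == x') &&
         [forall j, h' j == (h j, (dyn G x u w).1.2 j)])%:R * (piH h' == y')%:R).
    apply: eq_bigr => h' _ /=.
    rewrite mulr_suml; apply: eq_bigr => x _; rewrite mulr_suml; apply: eq_bigr => h _.
    rewrite mulr_suml; apply: eq_bigr => u _; by rewrite mulr_suml.
  rewrite exchange_big; apply: eq_bigr => x _; rewrite exchange_big; apply: eq_bigr => h _.
  rewrite exchange_big; apply: eq_bigr => u _; exact: exchange_big.
apply: eq_bigr => x _; apply: eq_bigr => h _.
rewrite mulr_sumr; apply: eq_bigr => u _; rewrite /PsiS !mulr_sumr; apply: eq_bigr => w _.
set z := (dyn G x u w).1.2.
pose E : {dffun forall j, hist j t.+1} := @finfun _ (fun j => hist j t.+1) (fun j => (h j, z j)).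
have BE : forall h' : {dffun forall j, hist j t.+1},
    [forall j, h' j == (h j, z j)] = (h' == E).
  move=> h'; apply/forallP/eqP => [H|->].
    by apply/ffunP => j; rewrite ffunE; apply/eqP/H.
  by move=> j; rewrite ffunE.
have PE : piH E = nextY (piH h) z.
  rewrite /piH /nextY /=; congr pair.
    by apply/ffunP => j; rewrite !ffunE.
  by rewrite ffunE.
rewrite (bigD1 E) //= big1 ?addr0; last first.
  by move=> h' /negbTE hE; rewrite BE hE andbF mulr0 mul0r.
rewrite BE eqxx andbT PE; ring.
Qed.

Unset Implicit Arguments.
Section Main.
Variables (F : strat i -> forall t, kT c t -> hist i t -> R)
    (Phi : ostrat i -> forall t, kT c t -> stateT G t -> ohist i t -> R).
Hypothesis hU : USI_with F Phi.
Variables (g : profile G).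
Hypothesis hg : valid_profile g.

Let rho : kstrat c := rho_of F (g i).
Let g' : profile G := upd g (kstrat_lift rho).

Lemma Hkey_lift t x y a :
  \sum_(h : {dffun forall j, hist j t})
    state_law g' x h * g' i t (h i) a * (piH h == y)%:R = Lw g' x y * rho t y.2 a.
Proof.
rewrite /Lw mulr_suml; apply: eq_bigr => h _.
rewrite /g' upd_i /kstrat_lift; case: eqP => [<-|_]; last by rewrite !mulr0 mul0r.
by rewrite /= !mulr1.
Qed.

Lemma Hkey_g t (ht : (t < horizon G)%N) x y a :
  \sum_(h : {dffun forall j, hist j t})
    state_law g x h * g i t (h i) a * (piH h == y)%:R = Lw g x y * rho t y.2 a.
Proof.
case: y => ho k /=.
have [hF [hPhi hC]] := hU.
set pk := prob_k g k.
have pk0 : 0 <= pk.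
  apply: sumr_ge0 => x0 _; apply: sumr_ge0 => h _; apply: mulr_ge0; last exact: ler0n.
  by apply: sl_ge0 => //; apply: ltnW.
have key : forall h, state_law g x h * (compress c (h i) == k)%:R =
    pk * (F (g i) t k (h i) * Phi (restr_prof g) t k x (restr_hist i h)).
  move=> h; have [pkp|pkn] := boolP (0 < pk).
    by rewrite -hC // /cond_prob -/pk [pk * _]mulrC divfK // gt_eqF.
  have pkz : pk = 0.
    by apply/eqP; rewrite eq_le pk0 andbT leNgt.
  rewrite pkz mul0r.
  have S0 := pkz; rewrite /pk /prob_k in S0.
  have nn : forall x0 (h0 : {dffun forall j, hist j t}),
      0 <= state_law g x0 h0 * (compress c (h0 i) == k)%:R.
    move=> x0 h0; apply: mulr_ge0; last exact: ler0n.
    by apply: sl_ge0 => //; apply: ltnW.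
  have H0 := psumr_eq0P (fun x0 _ => sumr_ge0 _ (fun h0 _ => nn x0 h0)) S0 (i:=x) isT.
  exact: (psumr_eq0P (fun h0 _ => nn x h0) H0 (i:=h) isT).
have gen2 : forall f : hist i t -> R,
   \sum_(h : {dffun forall j, hist j t}) state_law g x h * f (h i) * (piH h == (ho, k))%:R
   = pk * Phi (restr_prof g) t k x ho * \sum_(hi : hist i t) F (g i) t k hi * f hi.
  move=> f; rewrite -(sum_merge (fun hi => F (g i) t k hi * f hi) ho) mulr_sumr.
  apply: eq_bigr => h _; rewrite /piH xpair_eqE.
  case: eqP => [<-|_]; last by rewrite andFb !mulr0.
  by rewrite /= mulr1 mulrAC key; ring.
rewrite (gen2 (fun hi => g i t hi a)).
rewrite /Lw (eq_bigr (fun h => state_law g x h * (fun _ => 1) (h i) * (piH h == (ho, k))%:R));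
  last by move=> h _; rewrite mulr1.
rewrite (gen2 (fun _ => 1)).
have -> : \sum_(hi : hist i t) F (g i) t k hi * (fun _ : hist i t => 1) hi = 1.
  rewrite -[RHS](hF _ (hg i) t ht k).2; apply: eq_bigr => hi _; by rewrite /= mulr1.
rewrite mulr1 /rho /rho_of /=; congr (_ * _).
by apply: eq_bigr => hi _; rewrite mulrC.
Qed.

Lemma Lw_eq t : (t < horizon G)%N -> forall x y, Lw g (t:=t) x y = Lw g' x y.
Proof.
elim: t => [|t IH] ht x y; first by [].
have ht' : (t < horizon G)%N by apply: ltnW.
rewrite !Lw_step (gen (rhoK:=rho) (Hkey_g t ht')) (gen (rhoK:=rho) (Hkey_lift t)).
apply: eq_bigr => x0 _; apply: eq_bigr => y0 _; rewrite IH //; congr (_ * _).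
by apply: eq_bigr => u _; rewrite /g' Q_upd.
Qed.

Lemma payoff_eq j : payoff g j = payoff g' j.
Proof.
rewrite /payoff; apply: eq_bigr => -[t ht] _ /=.
rewrite (gen (rhoK:=rho) (Hkey_g t ht) (fun x _ u => \sum_(w : noiseT G t) noise_law G w * (dyn G x u w).2 j)).
rewrite (gen (rhoK:=rho) (Hkey_lift t) (fun x _ u => \sum_(w : noiseT G t) noise_law G w * (dyn G x u w).2 j)).
apply: eq_bigr => x0 _; apply: eq_bigr => y0 _; rewrite Lw_eq //; congr (_ * _).
by apply: eq_bigr => u _; rewrite /g' Q_upd.
Qed.
End Main.
End Pf.

Theorem lemma5 (R : realType) (G : game R) (i : player G) (c : compression i)
    (F : strat i -> forall t, kT c t -> hist i t -> R)
    (Phi : ostrat i -> forall t, kT c t -> stateT G t -> ohist i t -> R) :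
  USI_with F Phi ->
  forall g : profile G, valid_profile g ->
  forall j : player G,
    payoff g j = payoff (upd g (kstrat_lift (rho_of F (g i)))) j.
Proof.
move=> hU g hg j. exact: (@payoff_eq R G i c F Phi hU g hg j).
Qed.
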